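(* Let $0<r'<r<1$ and $c>0$. Then the map $F:\mathbb{Z}((T))_{r,\le c}\to\mathbb{R}$, $\sum_{n\gg-\infty}a_nT^n\mapsto\sum_{n\gg-\infty}a_n(r')^n$, is continuous.
   Context: $\mathbb{Z}((T))_{r,\le c}$ is the set of integer Laurent series $\sum_{n\gg-\infty}a_nT^n$ ($a_n\in\mathbb{Z}$, $a_n=0$ for $n$ sufficiently negative) with $\sum|a_n|r^n\le c$, with the $T$-adic topology given by the norm $\|f\|=\delta^{v_T(f)}$ for fixed $\delta\in(0,1)$, $v_T(f)$ being the smallest index of a nonzero coefficient. $\mathbb{R}$ has its usual topology. *)

(* Defs.v *)
From HB Require Import structures.
From mathcomp Require Import all_boot all_order all_algebra.
From mathcomp Require Import all_classical all_reals topology normedtype sequences.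
Set Implicit Arguments. Unset Strict Implicit. Unset Printing Implicit Defensive.
Import Order.TTheory GRing.Theory Num.Theory numFieldNormedType.Exports.
Local Open Scope ring_scope.

(* An integer Laurent series sum_n a_n T^n is represented by its coefficient
   function a : int -> int, with a_n = 0 for n sufficiently negative. *)
Definition laurent (a : int -> int) : Prop :=
  exists N : int, forall n : int, n < N -> a n = 0.

(* Z((T))_{r, <= c}: Laurent series with sum_n |a_n| r^n <= c.
   The series has nonnegative terms, so "sum <= c" is literally
   "every finite partial sum is <= c". *)
Definition Zr (R : realType) (r c : R) (a : int -> int) : Prop :=
  laurent a /\
  forall s : seq int, uniq s -> \sum_(n <- s) (`|a n|%:~R * r ^ n) <= c.

(* The value sum_n a_n x^n, as the limit of the symmetric partial sums
   over the windows [-M, M] (only finitely many negative indices contribute). *)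
Definition laurent_eval (R : realType) (x : R) (a : int -> int) : R :=
  limn (fun M : nat =>
    \sum_(i < (M + M)%N.+1) ((a (i%:Z - M%:Z))%:~R * x ^ (i%:Z - M%:Z))).

(* T-adic norm ||h|| = delta^(v_T h) (and ||0|| = 0).
   tnorm_lt delta h d  <->  ||h|| < d  (for d > 0):
   every index n with delta^n >= d carries a zero coefficient. *)
Definition tnorm_lt (R : realType) (delta : R) (h : int -> int) (d : R) : Prop :=
  forall n : int, d <= delta ^ n -> h n = 0.

(* Main.v *)
Require Import Defs.
From HB Require Import structures.
From mathcomp Require Import all_boot all_order all_algebra.
From mathcomp Require Import all_classical all_reals topology normedtype sequences.
From mathcomp Require Import zify lra.
Import Order.TTheory GRing.Theory Num.Theory numFieldNormedType.Exports.
Local Open Scope ring_scope.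

Set Implicit Arguments. Unset Strict Implicit.
Section S.
Variable R : realType.

Definition W (F : int -> R) (M : nat) : R :=
  \sum_(i < (M + M)%N.+1) F (i%:Z - M%:Z).

Definition win (M : nat) : seq int := [seq (i%:Z - M%:Z) | i <- iota 0 (M + M).+1].

Lemma W_seq F M : W F M = \sum_(n <- win M) F n.
Proof. by rewrite /W /win big_map -(big_mkord xpredT (fun i : nat => F (i%:Z - M%:Z))) /index_iota subn0. Qed.

Lemma win_uniq M : uniq (win M).
Proof.
rewrite map_inj_uniq ?iota_uniq // => i j /addIr [] //.
Qed.

Lemma W_S F M : W F M.+1 = F (- (M.+1)%:Z) + W F M + F (M.+1)%:Z.
Proof.
rewrite /W addSn addnS big_ord_recl big_ord_recr /= -addrA; congr (_ + _).
  by congr F; rewrite sub0r.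
congr (_ + _); first by apply: eq_bigr => i _; congr F; rewrite /bump /=; lia.
by congr F; rewrite /bump /=; lia.
Qed.

Lemma W_ge0 F M : (forall n, 0 <= F n) -> 0 <= W F M.
Proof. by move=> H; rewrite /W; apply: sumr_ge0. Qed.

Lemma W_cvg F B : (forall n, 0 <= F n) -> (forall M, W F M <= B) -> cvgn (W F).
Proof.
move=> H HB; apply/cvg_ex; eexists; apply: nondecreasing_cvgn.
  apply: homo_leq; [exact: lexx | move=> y x z; exact: le_trans |].
  by move=> i; rewrite W_S -addrA ler_wpDl // ler_wpDr.
by exists B => _ [M _ <-].
Qed.

Lemma W_le F G M : (forall n, F n <= G n) -> W F M <= W G M.
Proof. by move=> H; rewrite /W; apply: ler_sum => i _. Qed.

Lemma W_B F G M : W F M - W G M = W (fun n => F n - G n) M.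
Proof. by rewrite /W -sumrB. Qed.

Lemma W_norm F M : `|W F M| <= W (fun n => `|F n|) M.
Proof. by rewrite /W; apply: ler_norm_sum. Qed.

Lemma W_scale k F M : W (fun n => k * F n) M = k * W F M.
Proof. by rewrite /W mulr_sumr. Qed.

Lemma expz_anti (q : R) (m n : int) : 0 < q -> q <= 1 -> m <= n -> q ^ n <= q ^ m.
Proof.
move=> q0 q1 mn.
have -> : n = m + (n - m) by rewrite addrC subrK.
rewrite expfzDr ?gt_eqF //.
have : 0 <= n - m by rewrite subr_ge0.
case: (n - m) => // k _.
rewrite ler_piMr ?exprz_ge0 ?(ltW q0) //.
exact: (exprn_ile1 k (ltW q0) q1).
Qed.


Lemma Zr_W (r c : R) a : Zr r c a -> forall M, W (fun n => `|a n|%:~R * r ^ n) M <= c.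
Proof. by move=> [_ H] M; rewrite W_seq; apply: H; apply: win_uniq. Qed.

Lemma xqr (x r : R) (n : int) : 0 < x -> 0 < r -> x ^ n = (x / r) ^ n * r ^ n.
Proof.
move=> x0 r0; rewrite -exprzMl ?unitfE ?mulf_neq0 ?invr_eq0 ?gt_eqF //.
by rewrite divfK // gt_eqF.
Qed.

Lemma eval_cvg (x r c : R) a : 0 < x -> x < r -> Zr r c a ->
  cvgn (W (fun n => (a n)%:~R * x ^ n)).
Proof.
move=> x0 xr Za; have r0 : 0 < r by apply: lt_trans xr.
set q := x / r.
have q0 : 0 < q by rewrite divr_gt0.
have q1 : q <= 1 by rewrite ler_pdivrMr // mul1r ltW.
case: (Za) => [[N HN] _].
have tb : forall n, `|a n|%:~R * x ^ n <= q ^ N * (`|a n|%:~R * r ^ n).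
  move=> n; case: (ltP n N) => [nN|Nn].
    by rewrite HN // normr0 (_ : (0:int)%:~R = 0 :> R) // !mul0r mulr0.
  rewrite (@xqr x r n x0 r0) mulrCA -/q; apply: ler_wpM2r.
    by rewrite mulr_ge0 ?exprz_ge0 ?(ltW r0) // intr_norm.
  exact: (@expz_anti q N n q0 q1 Nn).
have Qcvg : cvgn (W (fun n => `|a n|%:~R * x ^ n)).
  apply: (@W_cvg _ (q ^ N * c)).
    by move=> n; rewrite mulr_ge0 ?exprz_ge0 ?(ltW x0) // intr_norm.
  move=> M; apply: (@le_trans _ _ (W (fun n => q ^ N * (`|a n|%:~R * r ^ n)) M)); first exact: W_le.
  rewrite W_scale ler_wpM2l ?exprz_ge0 ?(ltW q0) //; exact: Zr_W.
have Pcvg : cvgn (W (fun n => `|a n|%:~R * x ^ n + (a n)%:~R * x ^ n)).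
  apply: (@W_cvg _ (2 * (q ^ N * c))).
    move=> n; rewrite -mulrDl mulr_ge0 ?exprz_ge0 ?(ltW x0) //.
    rewrite intr_norm; have := ler_norm (- (a n)%:~R : R); rewrite normrN; lra.
  move=> M; apply: (@le_trans _ _ (W (fun n => 2 * (q ^ N * (`|a n|%:~R * r ^ n))) M)).
    apply: W_le => n; have := tb n.
    have : (a n)%:~R * x ^ n <= `|a n|%:~R * x ^ n.
      by apply: ler_wpM2r; [rewrite exprz_ge0 ?(ltW x0) | rewrite intr_norm ler_norm].
    lra.
  rewrite W_scale W_scale ler_wpM2l // ler_wpM2l ?exprz_ge0 ?(ltW q0) //; exact: Zr_W.
have -> : W (fun n => (a n)%:~R * x ^ n) =
   (W (fun n => `|a n|%:~R * x ^ n + (a n)%:~R * x ^ n)) - W (fun n => `|a n|%:~R * x ^ n).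
  apply: funext => M; symmetry; rewrite -[LHS]/(W _ M - W _ M) W_B /W; apply: eq_bigr => i _.
  by rewrite addrAC subrr add0r.
exact: is_cvgB.
Qed.

Lemma W_D F G M : W (fun n => F n + G n) M = W F M + W G M.
Proof. by rewrite /W big_split. Qed.

End S.
Unset Implicit Arguments.

Theorem mainTheorem13 (R : realType) (r r' c delta : R) :
  0 < r' -> r' < r -> r < 1 -> 0 < c -> 0 < delta -> delta < 1 ->
  forall f : int -> int, Zr r c f ->
  forall eps : R, 0 < eps ->
  exists d : R, 0 < d /\
    forall g : int -> int, Zr r c g ->
      tnorm_lt delta (fun n => g n - f n) d ->
      `|laurent_eval r' g - laurent_eval r' f| < eps.
Proof.
move=> r'0 r'r r1 c0 d0 d1 f Zf eps e0.
have r0 : 0 < r := lt_trans r'0 r'r.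
set q := r' / r.
have q0 : 0 < q by rewrite divr_gt0.
have q1 : q < 1 by rewrite ltr_pdivrMr // mul1r.
have qn : `|q| < 1 by rewrite ger0_norm // ltW.
have epos : 0 < eps / (2 * c) by rewrite divr_gt0 // mulr_gt0.
have := cvgr0_norm_lt _ (cvg_expr qn) _ epos.
case => K _ HK; have {HK} HK := HK K (leqnn K).
move: HK => /=; rewrite ger0_norm ?exprn_ge0 ?(ltW q0) // ltr_pdivlMr ?mulr_gt0 // => HK.
exists (delta ^+ K); split; first exact: exprn_gt0.
move=> g Zg Ht.
have E : forall a, laurent_eval r' a = limn (W (fun n => (a n)%:~R * r' ^ n)) by [].
rewrite !E.
have cg := @eval_cvg R r' r c g r'0 r'r Zg.
have cf := @eval_cvg R r' r c f r'0 r'r Zf.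
have cD : cvgn (W (fun n => (g n)%:~R * r' ^ n) - W (fun n => (f n)%:~R * r' ^ n)).
  exact: is_cvgB.
have HD : W (fun n => (g n)%:~R * r' ^ n) - W (fun n => (f n)%:~R * r' ^ n)
   = W (fun n => (g n - f n)%:~R * r' ^ n).
  apply: funext => M; rewrite -[LHS]/(W _ M - W _ M) W_B /W; apply: eq_bigr => i _.
  by rewrite intrB mulrBl.
rewrite -limB // HD; rewrite HD in cD.
set D := W _ in cD *.
have B : forall M, `|D M| <= q ^+ K * (2 * c).
  move=> M; apply: le_trans (W_norm _ _) _.
  apply: (@le_trans _ _ (W (fun n => q ^+ K * (`|g n|%:~R * r ^ n + `|f n|%:~R * r ^ n)) M)).
    apply: W_le => n.
    case: (eqVneq (g n - f n) 0) => [->|hn].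
      rewrite (_ : (0:int)%:~R = 0 :> R) // mul0r normr0.
      by rewrite mulr_ge0 ?exprn_ge0 ?(ltW q0) // addr_ge0 // mulr_ge0 ?exprz_ge0 ?(ltW r0) // intr_norm.
    have Kn : K%:Z <= n.
      rewrite leNgt; apply/negP => nK; apply: (negP hn); apply/eqP; apply: Ht.
      exact: (@expz_anti R delta n K d0 (ltW d1) (ltW nK)).
    rewrite normrM -intr_norm (ger0_norm (exprz_ge0 _ (ltW r'0))).
    rewrite (@xqr R r' r n r'0 r0) -/q mulrCA -mulrDl.
    apply: ler_pM.
    - exact: exprz_ge0 (ltW q0).
    - by rewrite mulr_ge0 ?exprz_ge0 ?(ltW r0) // intr_norm.
    - exact: (@expz_anti R q K n q0 (ltW q1) Kn).
    - rewrite ler_wpM2r ?exprz_ge0 ?(ltW r0) //.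
      by rewrite -intrD ler_int ler_normB.
  rewrite W_scale W_D ler_wpM2l ?exprn_ge0 ?(ltW q0) //.
  have := Zr_W Zg M; have := Zr_W Zf M; lra.
have Hl : `|limn D| <= q ^+ K * (2 * c).
  apply/ler_normlP; split.
    rewrite -limN //; apply: (limr_le (is_cvgN cD)).
    by apply: nearW => M; have /ler_normlP [] := B M.
  apply: (limr_le cD).
  by apply: nearW => M; have /ler_normlP [] := B M.
exact: le_lt_trans Hl HK.
Qed.
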